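(* Let $\mathcal{H}$ be a complex Hilbert space and $B,C\in\mathcal{B}(\mathcal{H})$. Then $$w\left(\begin{bmatrix}0 & B\\ C & 0\end{bmatrix}\right)\le \frac12\max\{\|B\|,\|C\|\}+\frac12\max\left\{r^{1/2}(|B||C^*|),\,r^{1/2}(|B^*||C|)\right\}.$$
   Context: $\mathcal{B}(\mathcal{H})$ is the algebra of bounded linear operators on $\mathcal{H}$ with operator norm $\|\cdot\|$. For $A\in\mathcal{B}(\mathcal{H})$, $A^*$ is the adjoint, $|A|=(A^*A)^{1/2}$, $|A^*|=(AA^* )^{1/2}$, $w(A)=\sup_{\|x\|=1}|\langle Ax,x\rangle|$ is the numerical radius, and $r(A)$ is the spectral radius. For $A,B,C,D\in\mathcal{B}(\mathcal{H})$, the operator matrix $\begin{bmatrix}A&B\\C&D\end{bmatrix}$ is the operator on $\mathcal{H}\oplus\mathcal{H}$ given by $(x_1,x_2)\mapsto(Ax_1+Bx_2,\,Cx_1+Dx_2)$; $0$ denotes the zero operator. *)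

(* Defs.v *)
From HB Require Import structures.
From mathcomp Require Import all_boot all_order all_algebra.
From mathcomp Require Import classical_sets boolp reals.
From mathcomp Require Import complex.
Set Implicit Arguments. Unset Strict Implicit. Unset Printing Implicit Defensive.
Import Order.TTheory GRing.Theory Num.Theory.
Local Open Scope ring_scope.
Local Open Scope classical_set_scope.
Local Open Scope complex_scope.

Section Hilbert.
Variable R : realType.
Variable V : lmodType R[i].

Definition hnorm (ip : V -> V -> R[i]) (x : V) : R :=
  Num.sqrt (complex.Re (ip x x)).

Definition is_hilbert (ip : V -> V -> R[i]) : Prop :=
  [/\ (forall (a : R[i]) (x y z : V), ip (a *: x + y) z = a * ip x z + ip y z),
      (forall x y : V, ip y x = (ip x y)^*),
      (forall x : V, 0 <= ip x x),
      (forall x : V, ip x x = 0 -> x = 0) &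
      (forall u : nat -> V,
         (forall e : R, 0 < e -> exists N : nat, forall m n : nat,
            (N <= m)%N -> (N <= n)%N -> hnorm ip (u m - u n) < e) ->
         exists l : V, forall e : R, 0 < e -> exists N : nat, forall n : nat,
            (N <= n)%N -> hnorm ip (u n - l) < e)].

Definition bounded_op (ip : V -> V -> R[i]) (A : V -> V) : Prop :=
  (forall (a : R[i]) (x y : V), A (a *: x + y) = a *: A x + A y) /\
  exists M : R, forall x : V, hnorm ip (A x) <= M * hnorm ip x.

Definition opnorm (ip : V -> V -> R[i]) (A : V -> V) : R :=
  sup [set hnorm ip (A x) | x in [set x : V | hnorm ip x = 1]].

Definition is_adjoint (ip : V -> V -> R[i]) (A As : V -> V) : Prop :=
  forall x y : V, ip (A x) y = ip x (As y).

Definition positive_op (ip : V -> V -> R[i]) (P : V -> V) : Prop :=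
  bounded_op ip P /\ forall x : V, 0 <= ip (P x) x.

Definition is_sqrt_op (ip : V -> V -> R[i]) (T P : V -> V) : Prop :=
  positive_op ip P /\ forall x : V, P (P x) = T x.

Definition invertible_op (ip : V -> V -> R[i]) (A : V -> V) : Prop :=
  exists S : V -> V, bounded_op ip S /\
    (forall x, A (S x) = x) /\ (forall x, S (A x) = x).

Definition specrad (ip : V -> V -> R[i]) (A : V -> V) : R :=
  sup [set Normc.normc lam | lam in
        [set lam : R[i] | ~ invertible_op ip (fun x => lam *: x - A x)]].

Definition ip2 (ip : V -> V -> R[i]) (x y : V * V) : R[i] :=
  ip x.1 y.1 + ip x.2 y.2.

Definition opmx (A B C D : V -> V) (x : V * V) : V * V :=
  (A x.1 + B x.2, C x.1 + D x.2).

Definition numrad2 (ip : V -> V -> R[i]) (T : V * V -> V * V) : R :=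
  sup [set Normc.normc (ip2 ip (T z) z) |
        z in [set z : V * V | complex.Re (ip2 ip z z) = 1]].

End Hilbert.

(* Main.v *)
Require Import Defs.
From HB Require Import structures.
From mathcomp Require Import all_boot all_order all_algebra.
From mathcomp Require Import classical_sets boolp reals.
From mathcomp Require Import complex.
From mathcomp Require Import lra ring.
Set Implicit Arguments. Unset Strict Implicit. Unset Printing Implicit Defensive.
Import Order.TTheory GRing.Theory Num.Theory.
Local Open Scope ring_scope.
Local Open Scope complex_scope.
Local Notation Re := complex.Re.
Local Notation Im := complex.Im.

Section Cplx.
Variable R : realType.
Implicit Types (w : R[i]) (r : R).

Lemma ReD w1 w2 : Re (w1 + w2) = Re w1 + Re w2. Proof. by case: w1 => a b; case: w2 => c d. Qed.
Lemma ReN w : Re (- w) = - Re w. Proof. by case: w => a b. Qed.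
Lemma ReB w1 w2 : Re (w1 - w2) = Re w1 - Re w2. Proof. by rewrite ReD ReN. Qed.
Lemma ReMC r w : Re (r%:C * w) = r * Re w.
Proof. by case: w => a b /=; rewrite mul0r subr0. Qed.
Lemma ReJ w : Re (conjc w) = Re w. Proof. by case: w => a b. Qed.
Lemma conjC_real r : conjc (r%:C) = r%:C. Proof. by rewrite /= oppr0. Qed.
Lemma ReC r : Re (r%:C) = r. Proof. by []. Qed.
Lemma ge0_real w : 0 <= w -> w = (Re w)%:C /\ 0 <= Re w.
Proof.
case: w => a b; rewrite lecE /= => /andP [/eqP b0 ha]; split => //.
by rewrite b0.
Qed.
Lemma mulJ w : w * conjc w = ((Re w)^+2 + (Im w)^+2)%:C.
Proof. case: w => a b /=. apply/eqP; rewrite eq_complex /=; apply/andP; split; apply/eqP; ring. Qed.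
Lemma normcE w : Normc.normc w = Num.sqrt ((Re w)^+2 + (Im w)^+2).
Proof. by case: w. Qed.
Lemma normc_real r : 0 <= r -> Normc.normc (r%:C) = r.
Proof. move=> h; rewrite normcE /= expr0n /= addr0 sqrtr_sqr ger0_norm //. Qed.
Lemma conjD (a b : R[i]) : conjc (a + b) = conjc a + conjc b. Proof. by case: a => ? ?; case: b => ? ? /=; rewrite opprD. Qed.
Lemma conjM (a b : R[i]) : conjc (a * b) = conjc a * conjc b.
Proof. case: a => ? ?; case: b => ? ? /=. apply/eqP; rewrite eq_complex /=; apply/andP; split; apply/eqP; ring. Qed.
Lemma conjN (a : R[i]) : conjc (- a) = - conjc a. Proof. by case: a. Qed.
Lemma conj0 : conjc (0 : R[i]) = 0. Proof. by rewrite /= oppr0. Qed.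
Lemma conjK (a : R[i]) : conjc (conjc a) = a. Proof. by case: a => ? ? /=; rewrite opprK. Qed.
End Cplx.

Lemma quad_le (R : realType) (a b c : R) : 0 <= c ->
  (forall t : R, 0 <= a + 2 * t * b + t ^+ 2 * c) -> b ^+ 2 <= a * c.
Proof.
move=> c0 h; have [cz|cp] := eqVneq c 0.
  have [bz|bn] := eqVneq b 0; first by rewrite bz cz; nra.
  have := h (- (a + 1) / (2 * b)); rewrite cz mulr0 addr0.
  have -> : 2 * (- (a + 1) / (2 * b)) * b = - (a + 1) by field; rewrite bn.
  lra.
have cp' : 0 < c by rewrite lt_def cp c0.
have := h (- b / c).
have -> : a + 2 * (- b / c) * b + (- b / c) ^+ 2 * c = a - b ^+ 2 / c by field; rewrite gt_eqF.
move=> H; have : 0 <= (a - b ^+ 2 / c) * c by nra.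
have -> : (a - b ^+ 2 / c) * c = a * c - b ^+ 2 by field; rewrite gt_eqF.
lra.
Qed.

Section PreHilbert.
Variables (R : realType) (W : lmodType R[i]) (ip : W -> W -> R[i]).
Hypothesis ipL : forall (a : R[i]) (x y z : W), ip (a *: x + y) z = a * ip x z + ip y z.
Hypothesis ipS : forall x y : W, ip y x = conjc (ip x y).
Hypothesis ipP : forall x : W, 0 <= ip x x.
Hypothesis ipD : forall x : W, ip x x = 0 -> x = 0.

Lemma ipDl x y z : ip (x + y) z = ip x z + ip y z.
Proof. by have := ipL 1 x y z; rewrite scale1r mul1r. Qed.
Lemma ip0l z : ip 0 z = 0.
Proof. have h := ipDl 0 0 z; rewrite addr0 in h. by apply: (addrI (ip 0 z)); rewrite -h addr0. Qed.
Lemma ipZl a x z : ip (a *: x) z = a * ip x z.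
Proof. by have := ipL a x 0 z; rewrite addr0 ip0l addr0. Qed.
Lemma ipNl x z : ip (- x) z = - ip x z.
Proof. by rewrite -scaleN1r ipZl mulN1r. Qed.
Lemma ipBl x y z : ip (x - y) z = ip x z - ip y z.
Proof. by rewrite ipDl ipNl. Qed.
Lemma ipDr z x y : ip z (x + y) = ip z x + ip z y.
Proof. by rewrite !(ipS _ z) ipDl conjD. Qed.
Lemma ipZr z a x : ip z (a *: x) = conjc a * ip z x.
Proof. by rewrite !(ipS _ z) ipZl conjM. Qed.
Lemma ip0r z : ip z 0 = 0.
Proof. by rewrite ipS ip0l conj0. Qed.
Lemma ipNr z x : ip z (- x) = - ip z x.
Proof. by rewrite !(ipS _ z) ipNl conjN. Qed.
Lemma ipBr z x y : ip z (x - y) = ip z x - ip z y.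
Proof. by rewrite ipDr ipNr. Qed.

Definition re x y := Re (ip x y).
Lemma reDl x y z : re (x + y) z = re x z + re y z. Proof. by rewrite /re ipDl ReD. Qed.
Lemma reDr z x y : re z (x + y) = re z x + re z y. Proof. by rewrite /re ipDr ReD. Qed.
Lemma reNl x z : re (- x) z = - re x z. Proof. by rewrite /re ipNl ReN. Qed.
Lemma reNr z x : re z (- x) = - re z x. Proof. by rewrite /re ipNr ReN. Qed.
Lemma reBl x y z : re (x - y) z = re x z - re y z. Proof. by rewrite reDl reNl. Qed.
Lemma reBr z x y : re z (x - y) = re z x - re z y. Proof. by rewrite reDr reNr. Qed.
Lemma reZl (r : R) x z : re (r%:C *: x) z = r * re x z. Proof. by rewrite /re ipZl ReMC. Qed.
Lemma reZr (r : R) x z : re z (r%:C *: x) = r * re z x. Proof. by rewrite /re ipZr conjC_real ReMC. Qed.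
Lemma re0l z : re 0 z = 0. Proof. by rewrite /re ip0l. Qed.
Lemma re0r z : re z 0 = 0. Proof. by rewrite /re ip0r. Qed.
Lemma re_sym x y : re x y = re y x. Proof. by rewrite /re (ipS x y) ReJ. Qed.
Lemma ipxx x : ip x x = (re x x)%:C. Proof. by case: (ge0_real (ipP x)). Qed.
Lemma re_ge0 x : 0 <= re x x. Proof. by case: (ge0_real (ipP x)). Qed.
Lemma re_eq0 x : re x x = 0 -> x = 0. Proof. by move=> h; apply: ipD; rewrite ipxx h. Qed.

Local Notation nx := (hnorm ip).
Lemma nxE x : nx x = Num.sqrt (re x x). Proof. by []. Qed.
Lemma nx_ge0 x : 0 <= nx x. Proof. exact: sqrtr_ge0. Qed.
Lemma nx_sq x : nx x ^+ 2 = re x x. Proof. by rewrite nxE sqr_sqrtr // re_ge0. Qed.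
Lemma nx_eq0 x : nx x = 0 -> x = 0.
Proof. by move=> h; apply: re_eq0; rewrite -nx_sq h expr0n. Qed.
Lemma nx0 : nx 0 = 0. Proof. by rewrite nxE re0l sqrtr0. Qed.

Lemma sq_le (a b : R) : 0 <= b -> a ^+ 2 <= b ^+ 2 -> a <= b.
Proof. move=> hb h; nra. Qed.
Lemma sq_eq (a b : R) : 0 <= a -> 0 <= b -> a ^+ 2 = b ^+ 2 -> a = b.
Proof. move=> ha hb h; apply/eqP; rewrite -(eqrXn2 (n := 2)) //; exact/eqP. Qed.

Section Form.
Variable f : W -> W -> R.
Hypothesis fDl : forall x y z, f (x + y) z = f x z + f y z.
Hypothesis fZl : forall (r : R) x z, f (r%:C *: x) z = r * f x z.
Hypothesis fsym : forall x y, f x y = f y x.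
Hypothesis fpos : forall x, 0 <= f x x.
Lemma formCS x y : f x y ^+ 2 <= f x x * f y y.
Proof.
have fDr : forall u v w, f u (v + w) = f u v + f u w.
  by move=> u v w; rewrite fsym fDl !(fsym u).
have fZr : forall (r : R) u v, f u (r%:C *: v) = r * f u v.
  by move=> r u v; rewrite fsym fZl fsym.
apply: quad_le => // t.
have := fpos (x + t%:C *: y).
rewrite fDl !fDr !fZl !fZr (fsym y x).
suff -> : f x x + 2 * t * f x y + t ^+ 2 * f y y = f x x + t * f x y + (t * f x y + t * (t * f y y)) by [].
ring.
Qed.
End Form.

Lemma re_CS x y : re x y ^+ 2 <= re x x * re y y.
Proof. apply: formCS; [exact: reDl | exact: reZl | exact: re_sym | exact: re_ge0]. Qed.
Lemma re_le x y : re x y <= nx x * nx y.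
Proof.
apply: sq_le; first by rewrite mulr_ge0 // nx_ge0.
by rewrite exprMn !nx_sq re_CS.
Qed.
Lemma nxD x y : nx (x + y) <= nx x + nx y.
Proof.
apply: sq_le; first by rewrite addr_ge0 // nx_ge0.
rewrite nx_sq reDl !reDr (re_sym y x).
have := re_le x y; rewrite -!nx_sq; nra.
Qed.
Lemma nxZ (r : R) x : nx (r%:C *: x) = `|r| * nx x.
Proof.
apply: sq_eq; [exact: nx_ge0 | by rewrite mulr_ge0 // nx_ge0 |].
by rewrite exprMn nx_sq reZl reZr real_normK ?num_real // -nx_sq; ring.
Qed.
Lemma nxZc (c : R[i]) x : nx (c *: x) = Normc.normc c * nx x.
Proof.
apply: sq_eq; [exact: nx_ge0 | by rewrite mulr_ge0 // ?nx_ge0 // normcE sqrtr_ge0 |].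
rewrite exprMn [nx (c *: x) ^+ 2]nx_sq [nx x ^+ 2]nx_sq normcE sqr_sqrtr; last by rewrite addr_ge0 // sqr_ge0.
by rewrite /re ipZl ipZr mulrA mulJ ReMC.
Qed.
Lemma nxN x : nx (- x) = nx x.
Proof. by rewrite -scaleN1r -(rmorphN1 (real_complex R)) nxZ normrN normr1 mul1r. Qed.
Lemma nxB x y : nx (x - y) <= nx x + nx y.
Proof. by rewrite -(nxN y) nxD. Qed.
Lemma nx_sym x y : nx (x - y) = nx (y - x).
Proof. by rewrite -nxN opprB. Qed.
Lemma nx_small x : (forall e : R, 0 < e -> nx x <= e) -> x = 0.
Proof.
move=> h; apply: nx_eq0; apply/eqP; rewrite eq_le nx_ge0 andbT.
rewrite leNgt; apply/negP => hp.
have := h (nx x / 2); lra.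
Qed.


Definition lin (A : W -> W) := forall (a : R[i]) x y, A (a *: x + y) = a *: A x + A y.
Definition symm (A : W -> W) := forall x y, re (A x) y = re x (A y).
Definition psd (A : W -> W) := forall x, 0 <= re (A x) x.
Definition bnd (A : W -> W) (K : R) := forall x, nx (A x) <= K * nx x.

Section LinFacts.
Variable A : W -> W.
Hypothesis hl : lin A.
Lemma linD x y : A (x + y) = A x + A y.
Proof. by have := hl 1 x y; rewrite !scale1r. Qed.
Lemma lin0 : A 0 = 0.
Proof. have h := linD 0 0; rewrite addr0 in h. by apply: (addrI (A 0)); rewrite -h addr0. Qed.
Lemma linZ a x : A (a *: x) = a *: A x.
Proof. by have := hl a x 0; rewrite !addr0 lin0 addr0. Qed.
Lemma linN x : A (- x) = - A x.
Proof. by rewrite -scaleN1r linZ scaleN1r. Qed.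
Lemma linB x y : A (x - y) = A x - A y.
Proof. by rewrite linD linN. Qed.
End LinFacts.

Lemma psd_CS A : lin A -> symm A -> psd A ->
  forall x y, re (A x) y ^+ 2 <= re (A x) x * re (A y) y.
Proof.
move=> hl hs hp x y.
apply: (@formCS (fun u v => re (A u) v)).
- by move=> u v w /=; rewrite linD // reDl.
- by move=> r u v /=; rewrite linZ // reZl.
- by move=> u v /=; rewrite hs re_sym.
- exact: hp.
Qed.

Lemma psd_norm A K : lin A -> symm A -> psd A -> 0 <= K -> bnd A K ->
  forall x, nx (A x) ^+ 2 <= K * re (A x) x.
Proof.
move=> hl hs hp hK hb x.
have h1 := psd_CS hl hs hp x (A x).
have h2 : re (A (A x)) (A x) <= K * nx (A x) * nx (A x).
  apply: le_trans (re_le _ _) _; apply: ler_wpM2r; [exact: nx_ge0 | exact: hb].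
rewrite -nx_sq in h1.
have hq := hp x. have hn := nx_ge0 (A x).
set n := nx (A x) in h1 h2 hn *. set q := re (A x) x in h1 hq *.
have h4 : q * re (A (A x)) (A x) <= q * (K * n * n) by apply: ler_wpM2l.
have h3 : n ^+ 2 * n ^+ 2 <= n ^+ 2 * (K * q) by lra.
have [n0|np] := eqVneq n 0; first by rewrite n0 expr0n /= mulr_ge0.
have np' : 0 < n ^+ 2 by rewrite exprn_gt0 // lt_def np hn.
by rewrite -(ler_pM2l np').
Qed.

Lemma homog A c : lin A -> (forall v, nx v = 1 -> c <= re (A v) v) ->
  forall x, c * nx x ^+ 2 <= re (A x) x.
Proof.
move=> hl hc x.
have [s0|sp] := eqVneq (nx x) 0.
  by rewrite s0 expr0n /= mulr0 (nx_eq0 s0) lin0 // re0l.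
have sp' : 0 < nx x by rewrite lt_def sp nx_ge0.
set u := ((nx x)^-1)%:C *: x.
have hu : nx u = 1 by rewrite nxZ ger0_norm ?invr_ge0 ?nx_ge0 // mulVf.
have := hc u hu.
rewrite /u linZ // reZl reZr => h.
have -> : re (A x) x = nx x ^+ 2 * ((nx x)^-1 * ((nx x)^-1 * re (A x) x)) by field.
by rewrite mulrC; apply: ler_wpM2l => //; rewrite sqr_ge0.
Qed.

Lemma approx A K c : lin A -> symm A -> 0 <= K -> bnd A K ->
  (forall x, c * nx x ^+ 2 <= re (A x) x) ->
  forall v e, nx v = 1 -> re (A v) v <= c + e ->
  nx (A v - c%:C *: v) ^+ 2 <= (K + `|c|) * e.
Proof.
move=> hl hs hK hb hc v e hv he.
pose D := fun x => A x - c%:C *: x.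
have lD : lin D.
  move=> a x y; rewrite /D hl scalerDr scalerBr scalerA [c%:C * a]mulrC -scalerA.
  by rewrite opprD addrACA.
have sD : symm D.
  by move=> x y; rewrite /D reBl reBr reZl reZr hs.
have pD : psd D.
  by move=> x; rewrite /D reBl reZl -nx_sq subr_ge0.
have bD : bnd D (K + `|c|).
  move=> x; rewrite /D; apply: le_trans (nxB _ _) _.
  by rewrite nxZ mulrDl lerD2r hb.
have := psd_norm lD sD pD (addr_ge0 hK (normr_ge0 c)) bD v.
rewrite /D reBl reZl -nx_sq hv expr1n mulr1 => h.
apply: le_trans h _; apply: ler_wpM2l; first by rewrite addr_ge0.
lra.
Qed.

Lemma neg_eig A K : lin A -> symm A -> 0 <= K -> bnd A K ->
  forall v0, re (A v0) v0 < 0 ->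
  exists c, c < 0 /\ forall d, 0 < d -> exists v, nx v = 1 /\
    re (A v) v <= c + d /\ nx (A v - c%:C *: v) <= d.
Proof.
move=> hl hs hK hb v0 hv0.
have v0n : nx v0 != 0.
  apply/eqP => h; move: hv0; rewrite (nx_eq0 h) lin0 // re0l ltxx //.
have v0p : 0 < nx v0 by rewrite lt_def v0n nx_ge0.
set u0 := ((nx v0)^-1)%:C *: v0.
have hu0 : nx u0 = 1 by rewrite nxZ ger0_norm ?invr_ge0 ?nx_ge0 // mulVf.
have hu0n : re (A u0) u0 < 0.
  rewrite /u0 linZ // reZl reZr mulrA -expr2.
  by rewrite pmulr_rlt0 // exprn_gt0 // invr_gt0.
pose S := fun y : R => exists v, nx v = 1 /\ y = - re (A v) v.
have hS : has_sup S.
  split; first by exists (- re (A u0) u0); exists u0.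
  exists K => y [v [hv ->]].
  rewrite -reNr; apply: le_trans (re_le _ _) _.
  by rewrite nxN hv mulr1 -[K]mulr1 -hv hb.
set c := - sup S.
have hcv : forall v, nx v = 1 -> c <= re (A v) v.
  move=> v hv; rewrite /c lerNl; apply: sup_upper_bound => //; by exists v.
exists c; split.
  by apply: le_lt_trans (hcv _ hu0) hu0n.
move=> d hd.
have hc0 : c <= 0 by apply: le_trans (hcv _ hu0) (ltW hu0n).
pose M := K + `|c| + 1 + d.
have hM : 0 < M by rewrite /M; have := normr_ge0 c; lra.
pose e := d ^+ 2 / M.
have he : 0 < e by rewrite /e divr_gt0 // exprn_gt0.
have heM : e * M = d ^+ 2 by rewrite /e mulfVK // gt_eqF.
have [y [v [hv ->]] hy] := sup_adherent he hS.
exists v; split => //.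
have hre : re (A v) v <= c + e by rewrite /c; lra.
split.
  apply: le_trans hre _; rewrite lerD2l.
  have : e * M <= d * M by rewrite heM /M; have := normr_ge0 c; nra.
  by rewrite ler_pM2r.
apply: sq_le; first exact: ltW.
apply: le_trans (approx hl hs hK hb (homog hl hcv) hv hre) _.
rewrite -heM /M; have := normr_ge0 c; nra.
Qed.

Lemma nx_unit_bnd A K v : bnd A K -> nx v = 1 -> nx (A v) <= K.
Proof. by move=> hb hv; rewrite -[K]mulr1 -hv hb. Qed.

Lemma prod_psd X Y KX KY : lin X -> symm X -> psd X -> 0 <= KX -> bnd X KX ->
  lin Y -> symm Y -> psd Y -> 0 <= KY -> bnd Y KY ->
  (forall v, X (Y v) = Y (X v)) -> psd (fun v => X (Y v)).
Proof.
move=> lX sX pX hKX bX lY sY pY hKY bY hXY v0.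
rewrite leNgt; apply/negP => hneg.
pose A := fun v => X (Y v).
have lA : lin A by move=> a x y; rewrite /A lY lX.
have sA : symm A by move=> x y; rewrite /A sX sY hXY.
have bA : bnd A (KX * KY).
  move=> x; rewrite /A; apply: le_trans (bX _) _; rewrite -mulrA; exact: ler_wpM2l.
have [c [hc hd]] := neg_eig lA sA (mulr_ge0 hKX hKY) bA hneg.
set a := - c.
have ha : 0 < a by rewrite /a oppr_gt0.
pose d := a ^+ 3 / (8 * (KX ^+ 2 * KY ^+ 2 + a ^+ 2 + 1)).
have hden : 0 < 8 * (KX ^+ 2 * KY ^+ 2 + a ^+ 2 + 1).
  by apply: mulr_gt0 => //; rewrite ltr_pwDr // addr_ge0 // ?sqr_ge0 // mulr_ge0 // sqr_ge0.
have hdpos : 0 < d by rewrite /d divr_gt0 // exprn_gt0.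
have hdeq : d * (8 * (KX ^+ 2 * KY ^+ 2 + a ^+ 2 + 1)) = a ^+ 3 by rewrite /d mulfVK // gt_eqF.
have [v [hv [_ hw]]] := hd d hdpos.
set w := A v - c%:C *: v in hw.
have hYv := nx_unit_bnd bY hv.
set t := re (Y v) v.
have ht : 0 <= t := pY v.
have hAv : A v = c%:C *: v + w by rewrite /w addrC subrK.
have F1 : a * t <= d * KY.
  have h0 := pX (Y v).
  have : re (X (Y v)) (Y v) <= c * t + d * KY.
    rewrite -/(A v) hAv reDl reZl re_sym -/t lerD2l.
    apply: le_trans (re_le _ _) _; apply: ler_pM => //; exact: nx_ge0.
  rewrite /a; lra.
have F2 : nx (Y v) ^+ 2 <= KY * t := psd_norm lY sY pY hKY bY v.
have F3 : nx (A v) <= KX * nx (Y v) := bX (Y v).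
have F4 : a <= nx (A v) + d.
  have : nx (c%:C *: v) <= nx (A v) + nx w.
    have -> : c%:C *: v = A v - w by rewrite hAv addrK.
    exact: nxB.
  rewrite nxZ hv mulr1 /a ler0_norm ?(ltW hc) //; lra.
set y := nx (Y v) in F2 F3. set z := nx (A v) in F3 F4.
have hy : 0 <= y := nx_ge0 _.
have hK2 : 0 <= KX ^+ 2 * KY ^+ 2 by rewrite mulr_ge0 // sqr_ge0.
have hd1 : d <= a / 2.
  have : d * (8 * (a ^+ 2)) <= a ^+ 3.
    rewrite -hdeq; apply: ler_wpM2l; [exact: ltW | lra].
  move=> h; nra.
have h1 : a - d <= KX * y by lra.
have h2 : (a - d) ^+ 2 <= KX ^+ 2 * y ^+ 2.
  have : 0 <= a - d by lra.
  move=> h0; have : 0 <= KX * y by lra.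
  move=> h0'; rewrite -exprMn; nra.
have h3 : a * (a - d) ^+ 2 <= KX ^+ 2 * KY ^+ 2 * d.
  have : a * (a - d) ^+ 2 <= a * (KX ^+ 2 * (KY * t)).
    apply: ler_wpM2l; first exact: ltW.
    apply: le_trans h2 _; apply: ler_wpM2l => //; exact: sqr_ge0.
  move=> h; apply: le_trans h _.
  have -> : a * (KX ^+ 2 * (KY * t)) = KX ^+ 2 * KY * (a * t) by ring.
  have -> : KX ^+ 2 * KY ^+ 2 * d = KX ^+ 2 * KY * (d * KY) by ring.
  apply: ler_wpM2l => //; apply: mulr_ge0 => //; exact: sqr_ge0.
have h4 : a ^+ 3 / 4 <= a * (a - d) ^+ 2.
  have hh : a / 2 <= a - d by lra.
  have hh2 : 0 <= a / 2 by lra.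
  have : (a / 2) ^+ 2 <= (a - d) ^+ 2 by nra.
  move=> h; nra.
have h5 : KX ^+ 2 * KY ^+ 2 * d <= a ^+ 3 / 8.
  have : KX ^+ 2 * KY ^+ 2 * d <= d * (KX ^+ 2 * KY ^+ 2 + a ^+ 2 + 1) by nra.
  move=> h; apply: le_trans h _.
  rewrite le_eqVlt; apply/orP; left; apply/eqP.
  by rewrite -hdeq; field.
have := le_trans h4 (le_trans h3 h5).
have a3 : 0 < a ^+ 3 by rewrite exprn_gt0.
lra.
Qed.

Lemma Fpos F G KF KG : lin F -> symm F -> 0 <= KF -> bnd F KF ->
  lin G -> 0 <= KG -> bnd G KG -> (forall v, G (F v) = 0) ->
  (forall v, 0 <= re (F v) v + re (G v) v) -> psd F.
Proof.
move=> lF sF hKF bF lG hKG bG hGF hsum v0.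
rewrite leNgt; apply/negP => hneg.
have [c [hc hd]] := neg_eig lF sF hKF bF hneg.
set a := - c.
have ha : 0 < a by rewrite /a oppr_gt0.
pose d := a ^+ 2 / (4 * (KG + a + 1)).
have hden : 0 < 4 * (KG + a + 1) by apply: mulr_gt0 => //; lra.
have hdpos : 0 < d by rewrite /d divr_gt0 // exprn_gt0.
have hdeq : d * (4 * (KG + a + 1)) = a ^+ 2 by rewrite /d mulfVK // gt_eqF.
have [v [hv [hre hw]]] := hd d hdpos.
have hGv : a * nx (G v) <= KG * d.
  have e1 : G (c%:C *: v) = - G (F v - c%:C *: v) by rewrite linB // hGF sub0r opprK.
  have : nx (G (c%:C *: v)) <= KG * d.
    rewrite e1 nxN; apply: le_trans (bG _) _; exact: ler_wpM2l.
  by rewrite linZ // nxZ ler0_norm ?(ltW hc).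
have hreG : re (G v) v <= nx (G v) by rewrite -[nx (G v)]mulr1 -hv re_le.
have := hsum v.
have hg := nx_ge0 (G v).
set g := nx (G v) in hGv hreG hg.
move=> hs.
have hag : a <= d + g by rewrite /a; lra.
have hd1 : d * (4 * a) <= a ^+ 2 by rewrite -hdeq; apply: ler_wpM2l; [exact: ltW| lra].
have hd2 : KG * d <= a ^+ 2 / 4.
  have : KG * d * 4 <= a ^+ 2 by rewrite -hdeq; nra.
  move=> h; rewrite ler_pdivlMr //; lra.
have hda : d <= a / 4 by nra.
have : 3 * a / 4 <= g by lra.
move=> h; have : a * (3 * a / 4) <= a * g by apply: ler_wpM2l => //; exact: ltW.
nra.
Qed.

Lemma lin_comp A1 A2 : lin A1 -> lin A2 -> lin (fun x => A1 (A2 x)).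
Proof. by move=> h1 h2 a x y; rewrite h2 h1. Qed.
Lemma lin_sub A1 A2 : lin A1 -> lin A2 -> lin (fun x => A1 x - A2 x).
Proof. by move=> h1 h2 a x y; rewrite h1 h2 scalerBr opprD addrACA. Qed.
Lemma bnd_comp A1 A2 K1 K2 : 0 <= K1 -> bnd A1 K1 -> bnd A2 K2 -> bnd (fun x => A1 (A2 x)) (K1 * K2).
Proof. move=> h0 h1 h2 x; apply: le_trans (h1 _) _; rewrite -mulrA; exact: ler_wpM2l. Qed.
Lemma bnd_sub A1 A2 K1 K2 : bnd A1 K1 -> bnd A2 K2 -> bnd (fun x => A1 x - A2 x) (K1 + K2).
Proof. move=> h1 h2 x; apply: le_trans (nxB _ _) _; rewrite mulrDl; exact: lerD. Qed.
Lemma nondeg u : (forall y, re u y = 0) -> u = 0.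
Proof. by move=> h; apply: re_eq0; exact: h. Qed.
Lemma psd_zero A K x : lin A -> symm A -> psd A -> 0 <= K -> bnd A K -> re (A x) x = 0 -> A x = 0.
Proof.
move=> hl hs hp hK hb h0; apply: nx_eq0.
have := psd_norm hl hs hp hK hb x; rewrite h0 mulr0 => h.
have : nx (A x) ^+ 2 = 0 by apply/eqP; rewrite eq_le h sqr_ge0.
by move/eqP; rewrite sqrf_eq0 => /eqP.
Qed.

Lemma intertw B Bs P Rr KB KP KR : lin B -> lin Bs -> (forall x y, re (B x) y = re x (Bs y)) ->
  0 <= KB -> bnd B KB -> bnd Bs KB ->
  lin P -> symm P -> psd P -> 0 <= KP -> bnd P KP ->
  lin Rr -> symm Rr -> psd Rr -> 0 <= KR -> bnd Rr KR ->
  (forall x, P (P x) = Bs (B x)) -> (forall x, Rr (Rr x) = B (Bs x)) ->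
  forall x, B (P x) = Rr (B x).
Proof.
move=> lB lBs adj hKB bB bBs lP sP pP hKP bP lR sR pR hKR bR hPP hRR.
pose X := fun x => Rr (B x) - B (P x).
pose Xs := fun x => Bs (Rr x) - P (Bs x).
have lX : lin X by apply: lin_sub; apply: lin_comp.
have lXs : lin Xs by apply: lin_sub; apply: lin_comp.
have KXp : 0 <= KR * KB + KB * KP by rewrite addr_ge0 // mulr_ge0.
have KXsp : 0 <= KB * KR + KP * KB by rewrite addr_ge0 // mulr_ge0.
have bX : bnd X (KR * KB + KB * KP) by apply: bnd_sub; apply: bnd_comp.
have bXs : bnd Xs (KB * KR + KP * KB) by apply: bnd_sub; apply: bnd_comp.
have adjX : forall x y, re (X x) y = re x (Xs y).
  by move=> x y; rewrite /X /Xs reBl reBr adj sR adj -sP.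
have adjX' : forall u y, re (Xs u) y = re u (X y).
  by move=> u y; rewrite re_sym -adjX re_sym.
have hRX : forall x, Rr (X x) = - X (P x).
  by move=> x; rewrite /X linB // hRR -hPP opprB.
have hPXs : forall y, P (Xs y) = - Xs (Rr y).
  by move=> y; rewrite /Xs linB // hPP -hRR opprB.
pose Q := fun x => Xs (X x).
have lQ : lin Q by apply: lin_comp.
have sQ : symm Q by move=> x y; rewrite /Q adjX' adjX.
have pQ : psd Q by move=> x; rewrite /Q adjX' -nx_sq sqr_ge0.
have KQp : 0 <= (KB * KR + KP * KB) * (KR * KB + KB * KP) by rewrite mulr_ge0.
have bQ : bnd Q ((KB * KR + KP * KB) * (KR * KB + KB * KP)) by apply: bnd_comp.
have cPQ : forall v, P (Q v) = Q (P v).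
  by move=> v; rewrite /Q hPXs hRX linN // opprK.
have pPQ := prod_psd lP sP pP hKP bP lQ sQ pQ KQp bQ cPQ.
have RX0 : forall x, Rr (X x) = 0.
  move=> x; apply: (psd_zero lR sR pR hKR bR).
  apply/eqP; rewrite eq_le pR andbT.
  rewrite hRX reNl adjX sP re_sym oppr_le0; exact: pPQ.
have Xs0 : forall u, Rr u = 0 -> Xs u = 0.
  move=> u hu; apply: nx_eq0.
  have h1 : P (Xs u) = 0 by rewrite hPXs hu lin0 // oppr0.
  have h2 : Xs u = - P (Bs u) by rewrite /Xs hu lin0 // sub0r.
  have : nx (Xs u) ^+ 2 = 0 by rewrite nx_sq {1}h2 reNl sP h1 re0r oppr0.
  by move/eqP; rewrite sqrf_eq0 => /eqP.
move=> x.
have hX : X x = 0.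
  apply: nx_eq0.
  have : nx (X x) ^+ 2 = 0 by rewrite nx_sq adjX (Xs0 _ (RX0 x)) re0r.
  by move/eqP; rewrite sqrf_eq0 => /eqP.
by apply/eqP; rewrite eq_sym -subr_eq0; apply/eqP.
Qed.

Lemma adj_sym B Bs : (forall x y, re (B x) y = re x (Bs y)) -> forall x y, re (Bs x) y = re x (B y).
Proof. by move=> h x y; rewrite re_sym -h re_sym. Qed.
Lemma intertw2 B Bs P Rr : lin B -> lin Bs -> lin P -> lin Rr -> symm P -> symm Rr ->
  (forall x y, re (B x) y = re x (Bs y)) -> (forall x, B (P x) = Rr (B x)) ->
  forall x, P (Bs x) = Bs (Rr x).
Proof.
move=> lB lBs lP lR sP sR adj hBP x.
apply/eqP; rewrite -subr_eq0; apply/eqP; apply: nondeg => y.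
by rewrite reBl sP (adj_sym adj) (adj_sym adj) sR hBP subrr.
Qed.

Lemma kitt P Q m r : lin P -> symm P -> psd P -> lin Q -> symm Q -> psd Q -> 0 <= m -> 0 <= r ->
  (forall x, nx (P x) ^+ 2 <= m * re (P x) x) -> (forall x, nx (Q x) ^+ 2 <= m * re (Q x) x) ->
  (forall x, re (Q (P x)) (P x) <= r * re (P x) x) ->
  forall x, re (P x) x + re (Q x) x <= (m + Num.sqrt r) * nx x ^+ 2.
Proof.
move=> lP sP pP lQ sQ pQ hm hr hPm hQm hr' x.
have ha := pP x. have hb := pQ x.
set a := re (P x) x in ha *. set b := re (Q x) x in hb *.
set rho := Num.sqrt r.
have hrho : 0 <= rho := sqrtr_ge0 r.
have hrho2 : rho ^+ 2 = r by rewrite sqr_sqrtr.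
have hn := nx_ge0 x. set n := nx x in hn *.
have hs : a + b <= nx (P x + Q x) * n by rewrite /a /b -reDl; exact: re_le.
have hN : nx (P x + Q x) ^+ 2 = nx (P x) ^+ 2 + 2 * re (Q x) (P x) + nx (Q x) ^+ 2.
  by rewrite !nx_sq reDl !reDr (re_sym (P x) (Q x)); ring.
have hK : re (Q x) (P x) ^+ 2 <= b * (r * a).
  apply: le_trans (psd_CS lQ sQ pQ x (P x)) _; apply: ler_wpM2l => //.
have hK2 : 2 * re (Q x) (P x) <= rho * (a + b).
  apply: sq_le; first by rewrite mulr_ge0 // addr_ge0.
  rewrite !exprMn hrho2; have := mulr_ge0 hr (sqr_ge0 (a - b)); nra.
have hPx := hPm x. have hQx := hQm x.
have hNx := nx_ge0 (P x + Q x).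
set N := nx (P x + Q x) in hs hN hNx.
have hs2 : (a + b) ^+ 2 <= N ^+ 2 * n ^+ 2.
  rewrite -exprMn; have h0 : 0 <= a + b by rewrite addr_ge0. nra.
have hs3 : (a + b) ^+ 2 <= (m + rho) * (a + b) * n ^+ 2.
  apply: le_trans hs2 _; rewrite -[(m + rho) * (a + b)]/((m + rho) * (a + b)).
  apply: ler_wpM2r; first exact: sqr_ge0.
  rewrite hN; lra.
have [s0|sp] := eqVneq (a + b) 0.
  by rewrite s0 mulr_ge0 // ?addr_ge0 // sqr_ge0.
have sp' : 0 < a + b by rewrite lt_def sp addr_ge0.
rewrite -(ler_pM2l sp'); nra.
Qed.

Lemma half_small : forall e : R, 0 < e -> exists N : nat, forall n : nat, (N <= n)%N -> (2^-1 : R) ^+ n < e.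
Proof.
move=> e he.
have hb : forall n : nat, (n%:R : R) + 1 <= 2 ^+ n.
  elim=> [|n IH]; first by rewrite expr0 add0r.
  rewrite exprS -natr1.
  have hn : 0 <= (n%:R : R) by [].
  lra.
have he' : 0 <= e^-1 by rewrite invr_ge0 ltW.
exists (Num.Def.archi_bound e^-1) => n hn.
have hN := archi_boundP he'.
have hNn : ((Num.Def.archi_bound e^-1)%:R : R) <= n%:R by rewrite ler_nat.
have hee : e * e^-1 = 1 by rewrite mulfV // gt_eqF.
have hq := hb n.
set N := ((Num.Def.archi_bound e^-1)%:R : R) in hN hNn.
have hnn : 0 <= (n%:R : R) by [].
have hqp : 0 < (2 : R) ^+ n by rewrite exprn_gt0.
have h1 : 1 < e * 2 ^+ n by nra.
rewrite exprVn -[X in X < _]mul1r ltr_pdivrMr //.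
Qed.

Definition conv (u : nat -> W) (l : W) :=
  forall e : R, 0 < e -> exists N : nat, forall n : nat, (N <= n)%N -> nx (u n - l) < e.

Lemma le_eps (a b : R) : (forall e, 0 < e -> a <= b + e) -> a <= b.
Proof.
move=> h; rewrite leNgt; apply/negP => hab.
have := h ((a - b) / 2); rewrite divr_gt0 ?subr_gt0 // => /(_ isT); lra.
Qed.


Lemma conv_unique u l l' : conv u l -> conv u l' -> l = l'.
Proof.
move=> h1 h2; apply/eqP; rewrite -subr_eq0; apply/eqP; apply: nx_small => e he.
have he2 : 0 < e / 2 by rewrite divr_gt0.
have [N1 hN1] := h1 _ he2; have [N2 hN2] := h2 _ he2.
have := hN1 (maxn N1 N2) (leq_maxl _ _); have := hN2 (maxn N1 N2) (leq_maxr _ _).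
set v := u (maxn N1 N2) => h2' h1'.
have -> : l - l' = (v - l') - (v - l) by rewrite opprB [in RHS]addrC addrA subrK.
apply: le_trans (nxB _ _) _; lra.
Qed.


Lemma normc_ge0 (w : R[i]) : 0 <= Normc.normc w.
Proof. by rewrite normcE sqrtr_ge0. Qed.
Lemma conv_lin u v l m (a : R[i]) : conv u l -> conv v m -> conv (fun n => a *: u n + v n) (a *: l + m).
Proof.
move=> hu hv e he.
have hc : 0 < Normc.normc a + 1 by have := normc_ge0 a; lra.
set k := Normc.normc a + 1.
have he2 : 0 < e / 2 / k by rewrite !divr_gt0.
have he3 : 0 < e / 2 by rewrite divr_gt0.
have [N1 hN1] := hu _ he2; have [N2 hN2] := hv _ he3.
exists (maxn N1 N2) => n hn.
have h1 := hN1 n (leq_trans (leq_maxl _ _) hn).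
have h2 := hN2 n (leq_trans (leq_maxr _ _) hn).
have -> : a *: u n + v n - (a *: l + m) = a *: (u n - l) + (v n - m).
  by rewrite scalerBr opprD addrACA.
apply: le_lt_trans (nxD _ _) _; rewrite nxZc.
have ha := normc_ge0 a.
have : Normc.normc a * nx (u n - l) <= k * nx (u n - l).
  by apply: ler_wpM2r; [exact: nx_ge0| rewrite /k lerDl].
have : k * nx (u n - l) < k * (e / 2 / k) by rewrite ltr_pM2l.
have -> : k * (e / 2 / k) = e / 2 by field; rewrite gt_eqF.
lra.
Qed.

Lemma conv_bound u l (C : R) : 0 <= C -> (forall n, nx (u n - l) <= C * (2^-1) ^+ n) -> conv u l.
Proof.
move=> hC hb e he.
have he' : 0 < e / (C + 1) by rewrite divr_gt0 // ltr_wpDl.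
have [N hN] := half_small he'.
exists N => n hn; apply: le_lt_trans (hb n) _.
have h1 := hN n hn.
have : C * (2^-1) ^+ n <= (C + 1) * (2^-1) ^+ n.
  by apply: ler_wpM2r; [rewrite exprn_ge0 // invr_ge0 | rewrite lerDl].
have : (C + 1) * (2^-1) ^+ n < (C + 1) * (e / (C + 1)) by rewrite ltr_pM2l // ltr_wpDl.
have -> : (C + 1) * (e / (C + 1)) = e by field; rewrite gt_eqF // ltr_wpDl.
lra.
Qed.

Lemma conv_cont L KL u l : lin L -> 0 <= KL -> bnd L KL -> conv u l -> conv (fun n => L (u n)) (L l).
Proof.
move=> lL hK bL hu e he.
have he' : 0 < e / (KL + 1) by rewrite divr_gt0 // ltr_wpDl.
have [N hN] := hu _ he'; exists N => n hn.
rewrite -linB //; apply: le_lt_trans (bL _) _.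
have h1 := hN n hn.
have : KL * nx (u n - l) <= (KL + 1) * nx (u n - l) by apply: ler_wpM2r; [exact: nx_ge0 | rewrite lerDl].
have : (KL + 1) * nx (u n - l) < (KL + 1) * (e / (KL + 1)) by rewrite ltr_pM2l // ltr_wpDl.
have -> : (KL + 1) * (e / (KL + 1)) = e by field; rewrite gt_eqF // ltr_wpDl.
lra.
Qed.

Lemma conv_ext u v l : (forall n, u n = v n) -> conv u l -> conv v l.
Proof. by move=> h; have -> : v = u by apply: funext => n; rewrite h. Qed.

Lemma two_ne0 : (2 : R) != 0. Proof. by rewrite pnatr_eq0. Qed.

Section Neumann.
Hypothesis hcomp : forall u : nat -> W,
  (forall e : R, 0 < e -> exists N : nat, forall m n : nat, (N <= m)%N -> (N <= n)%N -> nx (u m - u n) < e) ->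
  exists l, conv u l.
Variables (A : W -> W) (K : R) (lam : R[i]).
Hypotheses (lA : lin A) (hK : 0 <= K) (bA : bnd A K) (hlam : 2 * K + 1 <= Normc.normc lam).

Let hlp : 0 < Normc.normc lam.
Proof. have := hK; have := hlam; lra. Qed.
Let lam0 : lam != 0.
Proof. by apply/eqP => h; move: hlp; rewrite h Normc.normc0 ltxx. Qed.
Let mu := lam^-1.
Let hmu : Normc.normc mu = (Normc.normc lam)^-1.
Proof. exact: Normc.normcV. Qed.
Let T := fun x => mu *: A x.
Let lT : lin T.
Proof. by move=> a x y; rewrite /T lA scalerDr !scalerA mulrC. Qed.
Let h := (2^-1 : R).
Let hh : 0 <= h.
Proof. by rewrite /h invr_ge0. Qed.
Let bT : bnd T h.
Proof.
move=> x; rewrite /T nxZc hmu.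
have hx := bA x; have hn := nx_ge0 (A x); have hnx := nx_ge0 x.
have hi : 0 < (Normc.normc lam)^-1 by rewrite invr_gt0.
have hi2 : (Normc.normc lam)^-1 * Normc.normc lam = 1 by rewrite mulVf // gt_eqF.
have h2 : h * 2 = 1 by rewrite /h (mulVf two_ne0).
have : (Normc.normc lam)^-1 * nx (A x) <= (Normc.normc lam)^-1 * (K * nx x) by rewrite ler_pM2l.
move=> h3; apply: le_trans h3 _.
have hK2 : (Normc.normc lam)^-1 * K <= h.
  have : (Normc.normc lam)^-1 * (2 * K) <= (Normc.normc lam)^-1 * Normc.normc lam.
    by rewrite ler_pM2l //; have := hlam; lra.
  rewrite hi2 => h4; nra.
rewrite mulrA; apply: ler_wpM2r => //.
Qed.

Fixpoint sN (n : nat) (x : W) : W := if n is n'.+1 then mu *: x + T (sN n' x) else 0.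

Let sN_lin n a x y : sN n (a *: x + y) = a *: sN n x + sN n y.
Proof.
elim: n => [|n IH] /=; first by rewrite scaler0 addr0.
rewrite IH lT scalerDr [mu *: (a *: x)]scalerA mulrC -scalerA addrACA.
by rewrite -scalerDr.
Qed.

Let c x := nx (mu *: x).
Let hc x : 0 <= c x. Proof. exact: nx_ge0. Qed.

Let d_bnd x n : nx (sN n.+1 x - sN n x) <= c x * h ^+ n.
Proof.
elim: n => [|n IH].
  by rewrite /= subr0 lin0 // addr0 expr0 mulr1.
have -> : sN n.+2 x - sN n.+1 x = T (sN n.+1 x - sN n x).
  have e : forall m, sN m.+1 x = mu *: x + T (sN m x) by [].
  by rewrite linB // (e n.+1) {2}(e n) [mu *: x + T (sN n.+1 x)]addrC addrKA.
apply: le_trans (bT _) _; rewrite exprS.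
have := ler_wpM2l hh IH; rewrite mulrCA; lra.
Qed.

Let tail x n k : nx (sN (n + k) x - sN n x) <= 2 * c x * h ^+ n - 2 * c x * h ^+ (n + k).
Proof.
elim: k => [|k IH]; first by rewrite addn0 subrr nx0 subrr.
rewrite addnS.
have -> : sN (n + k).+1 x - sN n x = (sN (n + k).+1 x - sN (n + k) x) + (sN (n + k) x - sN n x).
  by rewrite addrA subrK.
apply: le_trans (nxD _ _) _.
have := d_bnd x (n + k).
have e2 : c x * h ^+ (n + k) = 2 * (c x * h ^+ (n + k).+1).
  have h2 : h * 2 = 1 by rewrite /h (mulVf two_ne0).
  rewrite exprS.
  have -> : 2 * (c x * (h * h ^+ (n + k))) = c x * ((h * 2) * h ^+ (n + k)) by ring.
  by rewrite h2 mul1r.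
lra.
Qed.

Let tail' x N m : (N <= m)%N -> nx (sN m x - sN N x) <= 2 * c x * h ^+ N.
Proof.
move=> hm; have := tail x N (m - N); rewrite subnKC //.
have : 0 <= 2 * c x * h ^+ m by rewrite !mulr_ge0 // exprn_ge0.
lra.
Qed.

Let cauchy x : forall e : R, 0 < e -> exists N : nat, forall m n : nat, (N <= m)%N -> (N <= n)%N -> nx (sN m x - sN n x) < e.
Proof.
move=> e he.
have he' : 0 < e / (4 * c x + 1) by rewrite divr_gt0 // ltr_wpDl // mulr_ge0.
have [N hN] := half_small he'.
exists N => m n hm hn.
have h1 := tail' x hm; have h2 := tail' x hn.
have -> : sN m x - sN n x = (sN m x - sN N x) - (sN n x - sN N x) by rewrite opprB addrA subrK.
apply: le_lt_trans (nxB _ _) _.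
have h3 := hN N (leqnn N).
have hp : 0 <= h ^+ N by rewrite exprn_ge0.
have : (4 * c x + 1) * h ^+ N < (4 * c x + 1) * (e / (4 * c x + 1)) by rewrite ltr_pM2l // ltr_wpDl // mulr_ge0.
have -> : (4 * c x + 1) * (e / (4 * c x + 1)) = e by field; rewrite gt_eqF // ltr_wpDl // mulr_ge0.
have := hc x; nra.
Qed.

Definition Sinv (x : W) : W := proj1_sig (cid (hcomp (cauchy x))).
Let hS x : conv (fun n => sN n x) (Sinv x).
Proof. exact: (proj2_sig (cid (hcomp (cauchy x)))). Qed.

Let lS : lin Sinv.
Proof.
move=> a x y; apply: (conv_unique (hS (a *: x + y))).
apply: (conv_ext _ (conv_lin a (hS x) (hS y))) => n; by rewrite sN_lin.
Qed.

Let sN_bnd x n : nx (sN n x) <= 2 * c x.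
Proof.
elim: n => [|n IH] /=; first by rewrite nx0 mulr_ge0.
apply: le_trans (nxD _ _) _; have := bT (sN n x); rewrite /h.
have h2 : (2^-1 : R) * 2 = 1 by rewrite (mulVf two_ne0).
have hi : 0 <= (2^-1 : R) by rewrite invr_ge0.
rewrite /c in IH *; have := nx_ge0 (sN n x); nra.
Qed.

Let bS : bnd Sinv (2 * (Normc.normc lam)^-1).
Proof.
move=> x; apply: le_eps => e he.
have [N hN] := hS x he.
have -> : Sinv x = sN N x - (sN N x - Sinv x) by rewrite subKr.
apply: le_trans (nxB _ _) _.
have := hN N (leqnn N); have := sN_bnd x N.
by rewrite /c nxZc hmu -mulrA; lra.
Qed.

Let L := fun v => lam *: v - A v.
Let lL : lin L.
Proof. by apply: lin_sub => // a u v; rewrite scalerDr !scalerA mulrC. Qed.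
Let bL : bnd L (Normc.normc lam + K).
Proof. by apply: bnd_sub => // u; rewrite nxZc. Qed.

Let LS x : L (Sinv x) = x.
Proof.
have h1 : conv (fun n => L (sN n x)) (L (Sinv x)).
  apply: conv_cont lL _ bL (hS x); have := hK; have := normc_ge0 lam; lra.
apply: (conv_unique h1).
apply: (conv_bound (C := Normc.normc lam * c x)) => [|n]; first by rewrite mulr_ge0 // normc_ge0.
have e1 : lam *: sN n.+1 x = x + A (sN n x).
  by rewrite /= scalerDr !scalerA mulfV // !scale1r.
have -> : L (sN n x) - x = - (lam *: (sN n.+1 x - sN n x)).
  rewrite /L scalerBr e1 opprB opprD.
  by rewrite addrAC addrA.
rewrite nxN nxZc -mulrA; apply: ler_wpM2l; [exact: normc_ge0 | exact: d_bnd].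
Qed.

Let SL x : Sinv (L x) = x.
Proof.
have e1 : forall n, sN n (L x) = x - iter n T x.
  elim=> [|n IH]; first by rewrite /= subrr.
  have eS : forall m y, sN m.+1 y = mu *: y + T (sN m y) by [].
  have eL : L x = lam *: x - A x by [].
  have eT : forall y, T y = mu *: A y by [].
  rewrite eS IH eL scalerBr scalerA (mulVf lam0) scale1r (linB lT) iterS !eT.
  by rewrite addrA subrK.
have hb : forall n, nx (iter n T x) <= nx x * h ^+ n.
  elim=> [|n IH]; first by rewrite /= expr0 mulr1.
  rewrite iterS; apply: le_trans (bT _) _; rewrite exprS mulrCA; exact: ler_wpM2l.
apply: esym; apply: (conv_unique _ (hS (L x))).
apply: (conv_bound (C := nx x)) => [|n]; first exact: nx_ge0.
by rewrite e1 addrAC subrr add0r nxN.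
Qed.

Lemma neumann : invertible_op ip (fun x => lam *: x - A x).
Proof.
exists Sinv; split; last by split; [exact: LS | exact: SL].
split; first exact: lS.
by exists (2 * (Normc.normc lam)^-1); exact: bS.
Qed.
End Neumann.

Lemma specrad_ge0 A : 0 <= specrad ip A.
Proof.
rewrite /specrad.
set E := (X in sup X).
case: (pselect (has_sup E)) => hE; last by rewrite sup_out.
case: (hE) => [[y hy] _].
apply: le_trans (sup_upper_bound hE hy).
by case: hy => lam _ <-; exact: normc_ge0.
Qed.

Lemma spec_le (hcomp : forall u : nat -> W,
  (forall e : R, 0 < e -> exists N : nat, forall m n : nat, (N <= m)%N -> (N <= n)%N -> nx (u m - u n) < e) ->
  exists l, conv u l) A K lam :
  lin A -> 0 <= K -> bnd A K -> ~ invertible_op ip (fun x => lam *: x - A x) ->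
  Normc.normc lam <= specrad ip A.
Proof.
move=> lA hK bA hni.
rewrite /specrad.
set E := (X in sup X).
have hE : has_sup E.
  split; first by exists (Normc.normc lam); exists lam.
  exists (2 * K + 1) => y [mu hmu <-].
  rewrite leNgt; apply/negP => hlt; apply: hmu.
  exact: (neumann hcomp lA hK bA (ltW hlt)).
by apply: sup_upper_bound => //; exists lam.
Qed.

Lemma not_inv A (tau L : R) : 0 < L ->
  (forall e, 0 < e -> exists y, L <= nx y ^+ 2 /\ nx (tau%:C *: y - A y) ^+ 2 <= e) ->
  ~ invertible_op ip (fun x => tau%:C *: x - A x).
Proof.
move=> hL hy [S [[lS [M hM]] [h1 h2]]].
set k := `|M| + 1.
have hk : 0 < k by rewrite /k ltr_wpDl.
have hk2 : 0 < 2 * k ^+ 2 by rewrite mulr_gt0 // exprn_gt0.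
have [y [hy1 hy2]] := hy (L / (2 * k ^+ 2)) (divr_gt0 hL hk2).
have e1 := h2 y.
set z := tau%:C *: y - A y in hy2 e1.
have hb : nx y <= k * nx z.
  rewrite -{1}e1; apply: le_trans (hM z) _; apply: ler_wpM2r; first exact: nx_ge0.
  by rewrite /k; have := ler_norm M; lra.
have hz := nx_ge0 z; have hyn := nx_ge0 y.
have hb2 : nx y ^+ 2 <= k ^+ 2 * nx z ^+ 2 by rewrite -exprMn; nra.
have : k ^+ 2 * nx z ^+ 2 <= k ^+ 2 * (L / (2 * k ^+ 2)).
  by apply: ler_wpM2l => //; exact: sqr_ge0.
have -> : k ^+ 2 * (L / (2 * k ^+ 2)) = L / 2 by field; rewrite gt_eqF.
lra.
Qed.

Lemma ratio (hcomp : forall u : nat -> W,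
  (forall e : R, 0 < e -> exists N : nat, forall m n : nat, (N <= m)%N -> (N <= n)%N -> nx (u m - u n) < e) ->
  exists l, conv u l) P Q KP KQ :
  lin P -> symm P -> psd P -> 0 <= KP -> bnd P KP ->
  lin Q -> symm Q -> psd Q -> 0 <= KQ -> bnd Q KQ ->
  forall x, re (Q (P x)) (P x) <= specrad ip (fun v => P (Q v)) * re (P x) x.
Proof.
move=> lP sP pP hKP bP lQ sQ pQ hKQ bQ x0.
set r := specrad ip (fun v => P (Q v)).
have hr : 0 <= r := specrad_ge0 _.
have scl : forall (s : R) z, re (P (s%:C *: z)) (s%:C *: z) = s ^+ 2 * re (P z) z.
  by move=> s z; rewrite linZ // reZl reZr; ring.
have sclQ : forall (s : R) z, re (Q (P (s%:C *: z))) (P (s%:C *: z)) = s ^+ 2 * re (Q (P z)) (P z).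
  by move=> s z; rewrite (linZ lP) (linZ lQ) reZl reZr; ring.
have hQy : forall y, re (Q y) y <= KQ * nx y ^+ 2.
  move=> y; apply: le_trans (re_le _ _) _.
  apply: le_trans (ler_wpM2r (nx_ge0 _) (bQ y)) _.
  by rewrite -mulrA -expr2.
have hQb : forall z, re (Q (P z)) (P z) <= KQ * KP * re (P z) z.
  move=> z; apply: le_trans (hQy _) _.
  by rewrite -mulrA; apply: ler_wpM2l => //; exact: psd_norm.
have norm1 : forall z, 0 < re (P z) z -> exists w, re (P w) w = 1 /\
    re (Q (P w)) (P w) * re (P z) z = re (Q (P z)) (P z).
  move=> z hz; set a := re (P z) z.
  have ha : 0 < Num.sqrt a by rewrite sqrtr_gt0.
  exists (((Num.sqrt a)^-1)%:C *: z); split.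
    by rewrite scl exprVn sqr_sqrtr ?ltW // mulVf // gt_eqF.
  rewrite sclQ exprVn sqr_sqrtr ?ltW //.
  by field; rewrite gt_eqF.
pose Tset := fun y : R => exists w, re (P w) w = 1 /\ y = re (Q (P w)) (P w).
rewrite leNgt; apply/negP => hx0.
have a0p : 0 < re (P x0) x0.
  rewrite lt_def pP andbT; apply/eqP => h0.
  have hPx : P x0 = 0 := psd_zero lP sP pP hKP bP h0.
  by move: hx0; rewrite h0 mulr0 hPx lin0 // re0l ltxx.
have [u0 [hu0 hu0']] := norm1 _ a0p.
have hTs : has_sup Tset.
  split; first by exists (re (Q (P u0)) (P u0)); exists u0.
  exists (KQ * KP) => y [w [hw ->]].
  by have := hQb w; rewrite hw mulr1.
set tau := sup Tset.
have htau_ub : forall w, re (P w) w = 1 -> re (Q (P w)) (P w) <= tau.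
  by move=> w hw; apply: sup_upper_bound => //; exists w.
have hrt : r < tau.
  have h1 := htau_ub _ hu0.
  rewrite -hu0' in hx0.
  have h2 : r * re (P x0) x0 < re (Q (P u0)) (P u0) * re (P x0) x0 by [].
  rewrite ltr_pM2r // in h2; lra.
have htau0 : 0 < tau by lra.
have hall : forall z, re (Q (P z)) (P z) <= tau * re (P z) z.
  move=> z; have := pP z; rewrite le_eqVlt => /orP [/eqP h0 | hz].
    have hPz : P z = 0 := psd_zero lP sP pP hKP bP (esym h0).
    by rewrite -h0 mulr0 hPz lin0 // re0l.
  have [w [hw hw']] := norm1 _ hz.
  rewrite -hw'; apply: ler_wpM2r; [exact: ltW | exact: htau_ub].
pose D := fun z => tau%:C *: P z - P (Q (P z)).
have lD : lin D.
  apply: lin_sub; last by apply: lin_comp => //; apply: lin_comp.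
  by move=> a u v; rewrite lP scalerDr !scalerA mulrC.
have sD : symm D.
  by move=> z y; rewrite /D reBl reBr reZl reZr sP sP sQ sP.
have pD : psd D.
  move=> z; rewrite /D reBl reZl [re (P (Q (P z))) z]sP subr_ge0; exact: hall.
set KD := tau * KP + KP * (KQ * KP).
have hKD : 0 <= KD by rewrite /KD addr_ge0 // !mulr_ge0 // ltW.
have bD : bnd D KD.
  apply: bnd_sub; last by apply: bnd_comp => //; apply: bnd_comp.
  move=> z; rewrite nxZ ger0_norm ?(ltW htau0) // -mulrA; apply: ler_wpM2l => //; exact: ltW.
have hL : 0 < tau / (2 * (KQ + 1)) by rewrite divr_gt0 // mulr_gt0 // ltr_wpDl.
have hni : ~ invertible_op ip (fun x => tau%:C *: x - P (Q x)).
  apply: (not_inv hL) => e he.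
  pose eps := Num.min (tau / 2) (e / (KD + 1)).
  have heps : 0 < eps by rewrite lt_min !divr_gt0 // ltr_wpDl.
  have heps1 : eps <= tau / 2 by rewrite ge_min lexx.
  have heps2 : eps <= e / (KD + 1) by rewrite ge_min lexx orbT.
  have [y [w [hw ->]] hy] := sup_adherent heps hTs.
  exists (P w); split.
    have h1 := hQy (P w).
    have h2 : tau / 2 <= (KQ + 1) * nx (P w) ^+ 2.
      have := sqr_ge0 (nx (P w)); rewrite -/tau in hy; nra.
    by rewrite ler_pdivrMr ?mulr_gt0 ?ltr_wpDl //; lra.
  have := psd_norm lD sD pD hKD bD w.
  have -> : re (D w) w = tau - re (Q (P w)) (P w).
    by rewrite /D reBl reZl hw mulr1 [re (P (Q (P w))) w]sP.
  move=> h; apply: le_trans h _.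
  have h3 : tau - re (Q (P w)) (P w) <= e / (KD + 1) by rewrite -/tau in hy; lra.
  have : KD * (tau - re (Q (P w)) (P w)) <= KD * (e / (KD + 1)) by apply: ler_wpM2l.
  move=> h4; apply: le_trans h4 _.
  rewrite mulrA ler_pdivrMr ?ltr_wpDl //; nra.
have hle := spec_le hcomp (lin_comp lP lQ) (mulr_ge0 hKP hKQ) (bnd_comp hKP bP bQ) hni.
rewrite normc_real ?(ltW htau0) // in hle.
rewrite -/r in hle; lra.
Qed.

End PreHilbert.

Section Pair.
Variables (R : realType) (V : lmodType R[i]) (ip : V -> V -> R[i]).
Hypothesis ipL : forall (a : R[i]) (x y z : V), ip (a *: x + y) z = a * ip x z + ip y z.
Hypothesis ipS : forall x y : V, ip y x = conjc (ip x y).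
Hypothesis ipP : forall x : V, 0 <= ip x x.
Hypothesis ipD : forall x : V, ip x x = 0 -> x = 0.
Local Notation ipp := (ip2 ip).

Lemma ip2L : forall (a : R[i]) (x y z : V * V), ipp (a *: x + y) z = a * ipp x z + ipp y z.
Proof. by move=> a x y z; rewrite /ip2 /= !ipL; ring. Qed.
Lemma ip2S : forall x y : V * V, ipp y x = conjc (ipp x y).
Proof. by move=> x y; rewrite /ip2 conjD -!ipS. Qed.
Lemma ip2P : forall x : V * V, 0 <= ipp x x.
Proof. by move=> x; rewrite /ip2 addr_ge0. Qed.
Lemma ip2D : forall x : V * V, ipp x x = 0 -> x = 0.
Proof.
move=> [x1 x2]; rewrite /ip2 /= => /eqP; rewrite paddr_eq0 // => /andP [/eqP h1 /eqP h2].
by rewrite (ipD h1) (ipD h2).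
Qed.
Lemma re2E u z : re ipp u z = re ip u.1 z.1 + re ip u.2 z.2.
Proof. by rewrite /re /ip2 ReD. Qed.
Lemma nx2_sq u : hnorm ipp u ^+ 2 = hnorm ip u.1 ^+ 2 + hnorm ip u.2 ^+ 2.
Proof. by rewrite (nx_sq ip2P) !(nx_sq ipP) re2E. Qed.

Lemma bnd2 (F : V * V -> V * V) (K : R) : 0 <= K ->
  (forall u, hnorm ip (F u).1 <= K * (hnorm ip u.1 + hnorm ip u.2)) ->
  (forall u, hnorm ip (F u).2 <= K * (hnorm ip u.1 + hnorm ip u.2)) ->
  bnd ipp F (2 * K).
Proof.
move=> hK h1 h2 u; apply: sq_le; first by apply: mulr_ge0; [apply: mulr_ge0 | exact: nx_ge0].
rewrite nx2_sq exprMn nx2_sq.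
have := h1 u; have := h2 u.
have := nx_ge0 ip (F u).1; have := nx_ge0 ip (F u).2.
have := nx_ge0 ip u.1; have := nx_ge0 ip u.2.
set a := hnorm ip (F u).1; set b := hnorm ip (F u).2.
set p := hnorm ip u.1; set q := hnorm ip u.2.
move=> hq hp hb ha hb' ha'.
have hKpq : 0 <= K * (p + q) by rewrite mulr_ge0 // addr_ge0.
have : a ^+ 2 <= (K * (p + q)) ^+ 2 by nra.
have : b ^+ 2 <= (K * (p + q)) ^+ 2 by nra.
have := sqr_ge0 (p - q).
have := sqr_ge0 K.
nra.
Qed.
End Pair.

Section Mixed.
Variables (R : realType) (V : lmodType R[i]) (ip : V -> V -> R[i]).
Hypothesis ipL : forall (a : R[i]) (x y z : V), ip (a *: x + y) z = a * ip x z + ip y z.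
Hypothesis ipS : forall x y : V, ip y x = conjc (ip x y).
Hypothesis ipP : forall x : V, 0 <= ip x x.
Hypothesis ipD : forall x : V, ip x x = 0 -> x = 0.

Lemma pairE (a : R[i]) (p q : V * V) : a *: p + q = (a *: p.1 + q.1, a *: p.2 + q.2).
Proof. by []. Qed.

Lemma mixed B Bs P Rr KB KP KR : lin B -> lin Bs -> (forall x y, re ip (B x) y = re ip x (Bs y)) ->
  0 <= KB -> bnd ip B KB -> bnd ip Bs KB ->
  lin P -> symm ip P -> psd ip P -> 0 <= KP -> bnd ip P KP ->
  lin Rr -> symm ip Rr -> psd ip Rr -> 0 <= KR -> bnd ip Rr KR ->
  (forall x, P (P x) = Bs (B x)) -> (forall x, Rr (Rr x) = B (Bs x)) ->
  forall y x, re ip (B y) x ^+ 2 <= re ip (P y) y * re ip (Rr x) x.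
Proof.
move=> lB lBs adj hKB bB bBs lP sP pP hKP bP lR sR pR hKR bR hPP hRR y x.
have hBP := intertw ipL ipS ipP ipD lB lBs adj hKB bB bBs lP sP pP hKP bP lR sR pR hKR bR hPP hRR.
have hPB := intertw2 ipL ipS ipP ipD lB lBs lP lR sP sR adj hBP.
pose F := fun u : V * V => (P u.1 + Bs u.2, B u.1 + Rr u.2).
pose G := fun u : V * V => (P u.1 - Bs u.2, Rr u.2 - B u.1).
set K := KB + KP + KR.
have hK : 0 <= K by rewrite /K !addr_ge0.
have hK2 : 0 <= 2 * K by rewrite mulr_ge0.
have lF : lin F.
  move=> a u w; rewrite /F !pairE /=; congr (_, _).
    by rewrite lP lBs scalerDr addrACA.
  by rewrite lB lR scalerDr addrACA.
have lG : lin G.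
  move=> a u w; rewrite /G !pairE /=; congr (_, _).
    by rewrite lP lBs scalerBr opprD addrACA.
  by rewrite lR lB scalerBr opprD addrACA.
have sF : symm (ip2 ip) F.
  move=> u z; rewrite !re2E /F /= !(reDl ipL) !(reDr ipL ipS) sP sR adj (adj_sym ipS adj); lra.
have bF : bnd (ip2 ip) F (2 * K).
  apply: (bnd2 ipP hK) => u; rewrite /F /=.
    apply: le_trans (nxD ipL ipS ipP _ _) _.
    have := bP u.1; have := bBs u.2; have := nx_ge0 ip u.1; have := nx_ge0 ip u.2; rewrite /K; nra.
  apply: le_trans (nxD ipL ipS ipP _ _) _.
  have := bB u.1; have := bR u.2; have := nx_ge0 ip u.1; have := nx_ge0 ip u.2; rewrite /K; nra.
have bG : bnd (ip2 ip) G (2 * K).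
  apply: (bnd2 ipP hK) => u; rewrite /G /=.
    apply: le_trans (nxB ipL ipS ipP _ _) _.
    have := bP u.1; have := bBs u.2; have := nx_ge0 ip u.1; have := nx_ge0 ip u.2; rewrite /K; nra.
  apply: le_trans (nxB ipL ipS ipP _ _) _.
  have := bB u.1; have := bR u.2; have := nx_ge0 ip u.1; have := nx_ge0 ip u.2; rewrite /K; nra.
have hGF : forall v, G (F v) = 0.
  move=> [u1 u2]; rewrite /F /G /=.
  rewrite !(linD lP) !(linD lBs) !(linD lR) !(linD lB) hPP hPB hRR -hBP !subrr.
  by [].
have hsum : forall v, 0 <= re (ip2 ip) (F v) v + re (ip2 ip) (G v) v.
  move=> [u1 u2]; rewrite !re2E /F /G /= !(reDl ipL) ?(reNl ipL).
  have := pP u1; have := pR u2; lra.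
have pF := Fpos (ip2L ipL) (ip2S ipS) (ip2P ipP) (ip2D ipP ipD) lF sF hK2 bF lG hK2 bG hGF hsum.
have := psd_CS (ip2L ipL) (ip2S ipS) lF sF pF (y, 0) (0, x).
rewrite !re2E /F /= (lin0 lBs) (lin0 lR) (lin0 lP) (lin0 lB) !addr0 !add0r.
by rewrite !(re0r ipL ipS) !addr0 !add0r.
Qed.
End Mixed.

Lemma phase (R : realType) (w : R[i]) : exists u : R[i], u * conjc u = 1 /\ Re (u * w) = Normc.normc w.
Proof.
have [->|wn] := eqVneq w 0.
  by exists 1; split; [rewrite conjc1 mulr1 | rewrite mulr0 Normc.normc0].
case: w wn => a b wn.
set s := Num.sqrt (a ^+ 2 + b ^+ 2).
have hs2 : s ^+ 2 = a ^+ 2 + b ^+ 2 by rewrite sqr_sqrtr // addr_ge0 // sqr_ge0.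
have hsp : 0 < s.
  rewrite sqrtr_gt0 lt_def addr_ge0 ?sqr_ge0 // andbT.
  apply/negP => /eqP h0.
  have ha : a ^+ 2 = 0 by apply/eqP; rewrite eq_le sqr_ge0 andbT; rewrite -h0 lerDl sqr_ge0.
  have hb : b ^+ 2 = 0 by apply/eqP; rewrite eq_le sqr_ge0 andbT; rewrite -h0 lerDr sqr_ge0.
  move/eqP: ha; rewrite sqrf_eq0 => /eqP ha0.
  move/eqP: hb; rewrite sqrf_eq0 => /eqP hb0.
  by move: wn; rewrite ha0 hb0 eqxx.
exists ((a / s) +i* (- b / s)); split.
  rewrite /=; apply/eqP; rewrite eq_complex /=; apply/andP; split; apply/eqP.
    transitivity ((a ^+ 2 + b ^+ 2) / s ^+ 2); first by field; rewrite gt_eqF.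
    by rewrite -hs2 mulfV // gt_eqF // exprn_gt0.
  by field; rewrite gt_eqF.
rewrite /= /Normc.normc -/s.
have -> : a / s * a - - b / s * b = (a ^+ 2 + b ^+ 2) / s by field; rewrite gt_eqF.
by rewrite -hs2 expr2 mulfK // gt_eqF.
Qed.

Lemma final_ineq (R : realType) (U W a b c d X Y M S : R) : 0 <= a -> 0 <= b -> 0 <= c -> 0 <= d ->
  0 <= X -> 0 <= Y -> X + Y = 1 -> 0 <= M + S -> U ^+ 2 <= a * c -> W ^+ 2 <= d * b ->
  a + b <= (M + S) * Y -> c + d <= (M + S) * X -> U + W <= 2^-1 * M + 2^-1 * S.
Proof.
move=> ha hb hc hd hX hY hXY hMS hU hW h1 h2.
have hUW : 2 * (U * W) <= a * d + b * c.
  have [hn|hp] := lerP (U * W) 0.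
    have : 0 <= a * d + b * c by rewrite addr_ge0 // mulr_ge0.
    lra.
  apply: sq_le; first by rewrite addr_ge0 // mulr_ge0.
  have h3 : U ^+ 2 * W ^+ 2 <= (a * c) * (d * b) by apply: ler_pM => //; exact: sqr_ge0.
  have h4 := sqr_ge0 (a * d - b * c).
  rewrite exprMn exprMn; nra.
have e1 : (U + W) ^+ 2 <= (a + b) * (c + d) by nra.
have e2 : (a + b) * (c + d) <= ((M + S) * Y) * ((M + S) * X).
  by apply: ler_pM => //; rewrite addr_ge0.
have e3 : X * Y * 4 <= 1 by have := sqr_ge0 (X - Y); nra.
have e4 : (U + W) ^+ 2 <= ((M + S) / 2) ^+ 2.
  apply: le_trans e1 _; apply: le_trans e2 _.
  have hMS2 := sqr_ge0 (M + S).
  have -> : (M + S) * Y * ((M + S) * X) = (M + S) ^+ 2 * (X * Y) by ring.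
  have -> : ((M + S) / 2) ^+ 2 = (M + S) ^+ 2 * (4^-1) by field.
  apply: ler_wpM2l => //.
  have h4 : (4 : R) != 0 by rewrite pnatr_eq0.
  rewrite -(ler_pM2r (_ : (0 : R) < 4)) // mulVf //.
have -> : 2^-1 * M + 2^-1 * S = (M + S) / 2 by field.
apply: sq_le => //; rewrite divr_ge0 //.
Qed.

Section Main.
Variables (R : realType) (V : lmodType R[i]) (ip : V -> V -> R[i]).
Hypothesis ipL : forall (a : R[i]) (x y z : V), ip (a *: x + y) z = a * ip x z + ip y z.
Hypothesis ipS : forall x y : V, ip y x = conjc (ip x y).
Hypothesis ipP : forall x : V, 0 <= ip x x.
Hypothesis ipD : forall x : V, ip x x = 0 -> x = 0.
Local Notation nx := (hnorm ip).
Local Notation rr := (re ip).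

Lemma opnorm_props A : lin A -> (exists M, bnd ip A M) -> bnd ip A (opnorm ip A) /\ 0 <= opnorm ip A.
Proof.
move=> lA [M hM].
rewrite /opnorm; set E := (X in sup X).
have ub : forall y, E y -> y <= `|M|.
  move=> y [x hx <-]; apply: le_trans (hM x) _; rewrite hx mulr1; exact: ler_norm.
split; last first.
  case: (pselect (has_sup E)) => hE; last by rewrite sup_out.
  case: (hE) => [[y hy] _]; apply: le_trans (sup_upper_bound hE hy).
  by case: hy => x _ <-; exact: nx_ge0.
move=> x.
have [s0|sp] := eqVneq (nx x) 0.
  by rewrite s0 mulr0 (nx_eq0 ipP ipD s0) (lin0 lA) (nx0 ipL) lexx.
have sp' : 0 < nx x by rewrite lt_def sp nx_ge0.
set u := ((nx x)^-1)%:C *: x.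
have hu : nx u = 1 by rewrite (nxZ ipL ipS ipP) ger0_norm ?invr_ge0 ?nx_ge0 // mulVf.
have hE : has_sup E.
  split; first by exists (nx (A u)); exists u.
  by exists `|M|.
have h1 : nx (A u) <= sup E by apply: sup_upper_bound => //; exists u.
have : nx (A u) = (nx x)^-1 * nx (A x).
  by rewrite (linZ lA) (nxZ ipL ipS ipP) ger0_norm // invr_ge0 nx_ge0.
move=> e; rewrite e in h1.
have h2 := ler_wpM2r (ltW sp') h1.
by rewrite mulrAC (mulVf sp) mul1r in h2.
Qed.

Lemma ImD (w1 w2 : R[i]) : Im (w1 + w2) = Im w1 + Im w2. Proof. by case: w1 => ? ?; case: w2 => ? ?. Qed.

Lemma pos_symm P : lin P -> (forall x, 0 <= ip (P x) x) -> symm ip P.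
Proof.
move=> lP hP x y.
have hI : forall z, Im (ip (P z) z) = 0.
  by move=> z; have [e _] := ge0_real (hP z); rewrite e.
have h := hI (x + 'i *: y).
rewrite (linD lP) (linZ lP) (ipDl ipL) !(ipDr ipL ipS) !(ipZl ipL) !(ipZr ipL ipS) in h.
have hx := hI x. have hy := hI y.
rewrite /re (ipS (P y) x) ReJ.
move: h hx hy.
generalize (ip (P x) x) (ip (P x) y) (ip (P y) x) (ip (P y) y).
case=> p1 p2; case=> a1 a2; case=> b1 b2; case=> c1 c2 /=.
lra.
Qed.


Lemma adj_lin B Bs : is_adjoint ip B Bs -> lin Bs.
Proof.
move=> hadj a x y.
have key : forall z, ip z (Bs (a *: x + y)) = ip z (a *: Bs x + Bs y).
  by move=> z; rewrite -hadj (ipDr ipL ipS) (ipZr ipL ipS) !hadj -(ipZr ipL ipS) -(ipDr ipL ipS).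
apply/eqP; rewrite -subr_eq0; apply/eqP; apply: ipD.
by rewrite (ipBr ipL ipS) key subrr.
Qed.
Lemma adj_re B Bs : is_adjoint ip B Bs -> forall x y, rr (B x) y = rr x (Bs y).
Proof. by move=> h x y; rewrite /re h. Qed.

Lemma adj_bnd B Bs K : is_adjoint ip B Bs -> 0 <= K -> bnd ip B K -> bnd ip Bs K.
Proof.
move=> hadj hK hB x.
have h1 : nx (Bs x) ^+ 2 <= K * nx (Bs x) * nx x.
  rewrite (nx_sq ipP) -(adj_re hadj); apply: le_trans (re_le ipL ipS ipP _ _) _.
  by apply: ler_wpM2r; [exact: nx_ge0 | exact: hB].
have hn := nx_ge0 ip (Bs x).
have [n0|np] := eqVneq (nx (Bs x)) 0; first by rewrite n0 mulr_ge0 // nx_ge0.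
have np' : 0 < nx (Bs x) by rewrite lt_def np hn.
rewrite expr2 in h1.
rewrite -(ler_pM2l np'); lra.
Qed.

Lemma abs_bnd1 B Bs P K : is_adjoint ip B Bs -> 0 <= K -> bnd ip B K -> symm ip P ->
  (forall x, P (P x) = Bs (B x)) -> bnd ip P K.
Proof.
move=> hadj hK hB sP hPP x; apply: sq_le; first by rewrite mulr_ge0 // nx_ge0.
rewrite (nx_sq ipP) -sP hPP (adj_sym ipS (adj_re hadj)) -(nx_sq ipP).
have := hB x; have := nx_ge0 ip (B x); have := nx_ge0 ip x; nra.
Qed.
Lemma abs_bnd2 B Bs P K : is_adjoint ip B Bs -> 0 <= K -> bnd ip Bs K -> symm ip P ->
  (forall x, P (P x) = B (Bs x)) -> bnd ip P K.
Proof.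
move=> hadj hK hB sP hPP x; apply: sq_le; first by rewrite mulr_ge0 // nx_ge0.
rewrite (nx_sq ipP) -sP hPP (adj_re hadj) -(nx_sq ipP).
have := hB x; have := nx_ge0 ip (Bs x); have := nx_ge0 ip x; nra.
Qed.

Lemma main_bound (hcomp : forall u : nat -> V,
  (forall e : R, 0 < e -> exists N : nat, forall m n : nat, (N <= m)%N -> (N <= n)%N -> nx (u m - u n) < e) ->
  exists l, conv ip u l)
  (B C Bs Cs absB absBs absC absCs : V -> V) :
  bounded_op ip B -> bounded_op ip C ->
  is_adjoint ip B Bs -> is_adjoint ip C Cs ->
  is_sqrt_op ip (fun x => Bs (B x)) absB ->
  is_sqrt_op ip (fun x => B (Bs x)) absBs ->
  is_sqrt_op ip (fun x => Cs (C x)) absC ->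
  is_sqrt_op ip (fun x => C (Cs x)) absCs ->
  numrad2 ip (opmx (fun _ => 0) B C (fun _ => 0))
  <= 2^-1 * Num.max (opnorm ip B) (opnorm ip C)
     + 2^-1 * Num.max (Num.sqrt (specrad ip (fun x => absB (absCs x))))
                      (Num.sqrt (specrad ip (fun x => absBs (absC x)))).
Proof.
move=> [lB bB0] [lC bC0] hadjB hadjC [[[laB _] paB'] haB] [[[laBs _] paBs'] haBs]
  [[[laC _] paC'] haC] [[[laCs _] paCs'] haCs].
have [bB nB0] := opnorm_props lB bB0.
have [bC nC0] := opnorm_props lC bC0.
set nB := opnorm ip B in bB nB0 *. set nC := opnorm ip C in bC nC0 *.
set M := Num.max nB nC.
have hBM : nB <= M by rewrite /M le_max lexx.
have hCM : nC <= M by rewrite /M le_max lexx orbT.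
have hM0 : 0 <= M by apply: le_trans hBM.
have lBs := adj_lin hadjB. have lCs := adj_lin hadjC.
have bBs := adj_bnd hadjB nB0 bB. have bCs := adj_bnd hadjC nC0 bC.
have paB : psd ip absB by move=> x; case: (ge0_real (paB' x)).
have paBs : psd ip absBs by move=> x; case: (ge0_real (paBs' x)).
have paC : psd ip absC by move=> x; case: (ge0_real (paC' x)).
have paCs : psd ip absCs by move=> x; case: (ge0_real (paCs' x)).
have saB := pos_symm laB paB'. have saBs := pos_symm laBs paBs'.
have saC := pos_symm laC paC'. have saCs := pos_symm laCs paCs'.
have baB := abs_bnd1 hadjB nB0 bB saB haB.
have baBs := abs_bnd2 hadjB nB0 bBs saBs haBs.
have baC := abs_bnd1 hadjC nC0 bC saC haC.
have baCs := abs_bnd2 hadjC nC0 bCs saCs haCs.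
have mixB := mixed ipL ipS ipP ipD lB lBs (adj_re hadjB) nB0 bB bBs laB saB paB nB0 baB
  laBs saBs paBs nB0 baBs haB haBs.
have mixC := mixed ipL ipS ipP ipD lC lCs (adj_re hadjC) nC0 bC bCs laC saC paC nC0 baC
  laCs saCs paCs nC0 baCs haC haCs.
have r1 := ratio ipL ipS ipP ipD hcomp laB saB paB nB0 baB laCs saCs paCs nC0 baCs.
have r2 := ratio ipL ipS ipP ipD hcomp laBs saBs paBs nB0 baBs laC saC paC nC0 baC.
have hm : forall P K, lin P -> symm ip P -> psd ip P -> 0 <= K -> bnd ip P K -> K <= M ->
    forall x, nx (P x) ^+ 2 <= M * rr (P x) x.
  move=> P K lP sP pP hK bP hKM x.
  apply: le_trans (psd_norm ipL ipS ipP lP sP pP hK bP x) _.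
  by apply: ler_wpM2r.
have k1 := kitt ipL ipS ipP laB saB paB laCs saCs paCs hM0 (specrad_ge0 _ _)
  (hm _ _ laB saB paB nB0 baB hBM) (hm _ _ laCs saCs paCs nC0 baCs hCM) r1.
have k2 := kitt ipL ipS ipP laBs saBs paBs laC saC paC hM0 (specrad_ge0 _ _)
  (hm _ _ laBs saBs paBs nB0 baBs hBM) (hm _ _ laC saC paC nC0 baC hCM) r2.
set s1 := Num.sqrt (specrad ip (fun x => absB (absCs x))) in k1 *.
set s2 := Num.sqrt (specrad ip (fun x => absBs (absC x))) in k2 *.
set S := Num.max s1 s2.
have hs1 : s1 <= S by rewrite /S le_max lexx.
have hs2 : s2 <= S by rewrite /S le_max lexx orbT.
have hS0 : 0 <= S by apply: le_trans (sqrtr_ge0 _) hs1.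
have hPhi : 0 <= 2^-1 * M + 2^-1 * S by rewrite addr_ge0 // mulr_ge0 // invr_ge0.
rewrite /numrad2; set E := (X in sup X).
have ub : forall v, E v -> v <= 2^-1 * M + 2^-1 * S.
  move=> v [[x y] hz <-].
  rewrite /opmx /= add0r addr0 /ip2 /=.
  have [u [hu hRe]] := phase (ip (B y) x + ip (C x) y).
  rewrite -hRe mulrDr -!(ipZl ipL) -(linZ lB) -(linZ lC) ReD.
  have hsc : forall P, lin P -> forall z, rr (P (u *: z)) (u *: z) = rr (P z) z.
    by move=> P lP z; rewrite (linZ lP) /re (ipZl ipL) (ipZr ipL ipS) mulrA hu mul1r.
  have hXY : nx x ^+ 2 + nx y ^+ 2 = 1.
    by rewrite !(nx_sq ipP); move: hz; rewrite /ip2 /= ReD.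
  have hU := mixB (u *: y) x. rewrite (hsc _ laB) in hU.
  have hW := mixC (u *: x) y. rewrite (hsc _ laC) in hW.
  apply: (final_ineq (a := rr (absB y) y) (b := rr (absCs y) y) (c := rr (absBs x) x)
      (d := rr (absC x) x) (X := nx x ^+ 2) (Y := nx y ^+ 2)) => //.
  - exact: sqr_ge0.
  - exact: sqr_ge0.
  - by rewrite addr_ge0.
  - apply: le_trans (k1 y) _; apply: ler_wpM2r; [exact: sqr_ge0 | by rewrite lerD2l].
  - apply: le_trans (k2 x) _; apply: ler_wpM2r; [exact: sqr_ge0 | by rewrite lerD2l].
case: (pselect (exists y, E y)) => hne.
  by apply: ge_sup.
rewrite sup_out //; by case.
Qed.

End Main.

Theorem mainTheorem1 (R : realType) (V : lmodType R[i]) (ip : V -> V -> R[i])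
  (B C Bs Cs absB absBs absC absCs : V -> V) :
  is_hilbert ip ->
  bounded_op ip B -> bounded_op ip C ->
  is_adjoint ip B Bs -> is_adjoint ip C Cs ->
  is_sqrt_op ip (fun x => Bs (B x)) absB ->
  is_sqrt_op ip (fun x => B (Bs x)) absBs ->
  is_sqrt_op ip (fun x => Cs (C x)) absC ->
  is_sqrt_op ip (fun x => C (Cs x)) absCs ->
  numrad2 ip (opmx (fun _ => 0) B C (fun _ => 0))
  <= 2^-1 * Num.max (opnorm ip B) (opnorm ip C)
     + 2^-1 * Num.max (Num.sqrt (specrad ip (fun x => absB (absCs x))))
                      (Num.sqrt (specrad ip (fun x => absBs (absC x)))).
Proof.
move=> [ipL ipS ipP ipD hcomp].
exact: (main_bound ipL ipS ipP ipD hcomp).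
Qed.
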